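(* Let $\boldsymbol{P}\in\mathbb{R}^{n\times n}$, $\boldsymbol{A}=\mathrm{softmax}(\boldsymbol{P})$ and $\alpha=\max_{i,j}\lvert\boldsymbol{P}_{ij}\rvert$. For $\boldsymbol{X}\in\mathbb{R}^{n\times d}$ and $\boldsymbol{W}_V\in\mathbb{R}^{d\times d}$ define $\mathrm{SA}(\boldsymbol{X})=\boldsymbol{A}\boldsymbol{X}\boldsymbol{W}_V$. Then $$\lVert\mathrm{HC}[\mathrm{SA}(\boldsymbol{X})]\rVert_F\le\sqrt{\frac{n e^{2\alpha}}{e^{2\alpha}+n-1}}\;\lVert\boldsymbol{W}_V\rVert_2\,\lVert\mathrm{HC}[\boldsymbol{X}]\rVert_F .$$ Moreover, if $\boldsymbol{P}=\boldsymbol{X}\boldsymbol{W}_Q(\boldsymbol{X}\boldsymbol{W}_K)^T/\sqrt d$ with $\boldsymbol{W}_Q,\boldsymbol{W}_K\in\mathbb{R}^{d\times d_k}$, and the rows $\boldsymbol{x}_i$ of $\boldsymbol{X}$ satisfy $\lVert\boldsymbol{x}_i\rVert_2\le\gamma$ for all $i$ (some $\gamma>0$), then $\alpha\le\gamma^2\lVert\boldsymbol{W}_Q\boldsymbol{W}_K^T\rVert_2/\sqrt d$.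
   Context: $\mathrm{softmax}$ is applied row-wise: $\mathrm{softmax}(\boldsymbol{P})_{ij}=e^{\boldsymbol{P}_{ij}}/\sum_t e^{\boldsymbol{P}_{it}}$. $\boldsymbol{1}\in\mathbb{R}^n$ is the all-ones vector and for $\boldsymbol{X}\in\mathbb{R}^{n\times d}$, $\mathrm{HC}[\boldsymbol{X}]=(\boldsymbol{I}-\frac1n\boldsymbol{1}\boldsymbol{1}^T)\boldsymbol{X}$ (the high-frequency component, i.e. $\boldsymbol{X}$ minus its column means). $\lVert\cdot\rVert_F$ is the Frobenius norm and $\lVert\cdot\rVert_2$ the spectral norm. *)

(* Defs.v *)
From HB Require Import structures.
From mathcomp Require Import all_boot all_order all_algebra.
From mathcomp Require Import boolp classical_sets reals.
From mathcomp Require Import sequences exp.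
Set Implicit Arguments. Unset Strict Implicit. Unset Printing Implicit Defensive.
Import Order.TTheory GRing.Theory Num.Theory.
Local Open Scope ring_scope.
Local Open Scope classical_set_scope.

Definition frob {R : realType} {m n : nat} (A : 'M[R]_(m, n)) : R :=
  Num.sqrt (\sum_(i < m) \sum_(j < n) A i j ^+ 2).

Definition specnorm {R : realType} {m n : nat} (A : 'M[R]_(m, n)) : R :=
  sup [set r | exists v : 'cV[R]_n, frob v <= 1 /\ r = frob (A *m v)].

Definition softmax {R : realType} {n m : nat} (P : 'M[R]_(n, m)) : 'M[R]_(n, m) :=
  \matrix_(i, j) (expR (P i j) / \sum_(t < m) expR (P i t)).

Definition HC {R : realType} {n d : nat} (X : 'M[R]_(n, d)) : 'M[R]_(n, d) :=
  (1%:M - (n%:R)^-1 *: (const_mx 1 : 'M[R]_n)) *m X.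

(* max_{i,j} |P_ij| (0 for an empty matrix). *)
Definition maxabs {R : realType} {n m : nat} (P : 'M[R]_(n, m)) : R :=
  \big[Num.max/0]_(i < n) \big[Num.max/0]_(j < m) `|P i j|.

(* Main.v *)
Require Import Defs.
From HB Require Import structures.
From mathcomp Require Import all_boot all_order all_algebra.
From mathcomp Require Import boolp classical_sets reals.
From mathcomp Require Import sequences exp.
From mathcomp Require Import ring lra.
Import Order.TTheory GRing.Theory Num.Theory.
Local Open Scope ring_scope.
Set Implicit Arguments. Unset Strict Implicit.

Section Gen.
Variable R : realType.

Lemma dsum_prod (m : nat) (a b : 'I_m -> R) :
  \sum_i \sum_j a i * b j = (\sum_i a i) * (\sum_j b j).
Proof. by rewrite mulr_suml; apply: eq_bigr => i _; rewrite mulr_sumr. Qed.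

Lemma cs_sum (m : nat) (f g : 'I_m -> R) :
  (\sum_i f i * g i) ^+ 2 <= (\sum_i f i ^+ 2) * (\sum_i g i ^+ 2).
Proof.
have H : 0 <= \sum_i \sum_j (f i * g j - f j * g i) ^+ 2.
  by apply: sumr_ge0 => i _; apply: sumr_ge0 => j _; apply: sqr_ge0.
have E : \sum_i \sum_j (f i * g j - f j * g i) ^+ 2 =
   \sum_i \sum_j (f i ^+ 2 * g j ^+ 2) + \sum_i \sum_j (g i ^+ 2 * f j ^+ 2)
   - 2 * \sum_i \sum_j ((f i * g i) * (f j * g j)).
  rewrite mulr_sumr -big_split -sumrB /=; apply: eq_bigr => i _.
  rewrite mulr_sumr -big_split -sumrB /=; apply: eq_bigr => j _.
  ring.
rewrite E !dsum_prod -expr2 [(\sum_i g i ^+ 2) * _]mulrC in H.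
lra.
Qed.

Lemma wjensen (m : nat) (w y : 'I_m -> R) : (forall i, 0 <= w i) ->
  (\sum_i w i * y i) ^+ 2 <= (\sum_i w i) * (\sum_i w i * y i ^+ 2).
Proof.
move=> w0.
have H : 0 <= \sum_i \sum_j w i * w j * (y i - y j) ^+ 2.
  apply: sumr_ge0 => i _; apply: sumr_ge0 => j _.
  by apply: mulr_ge0; [apply: mulr_ge0|apply: sqr_ge0].
have E : \sum_i \sum_j w i * w j * (y i - y j) ^+ 2 =
   \sum_i \sum_j (w i * (w j * y j ^+ 2)) + \sum_i \sum_j ((w i * y i ^+ 2) * w j)
   - 2 * \sum_i \sum_j ((w i * y i) * (w j * y j)).
  rewrite mulr_sumr -big_split -sumrB /=; apply: eq_bigr => i _.
  rewrite mulr_sumr -big_split -sumrB /=; apply: eq_bigr => j _.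
  ring.
rewrite E !dsum_prod -expr2 [(\sum_i w i * y i ^+ 2) * _]mulrC in H.
lra.
Qed.


Definition fs {m n : nat} (A : 'M[R]_(m, n)) : R := \sum_i \sum_j A i j ^+ 2.

Lemma fs_ge0 m n (A : 'M[R]_(m, n)) : 0 <= fs A.
Proof. by apply: sumr_ge0 => i _; apply: sumr_ge0 => j _; apply: sqr_ge0. Qed.

Lemma frobE m n (A : 'M[R]_(m, n)) : frob A = Num.sqrt (fs A).
Proof. by []. Qed.

Lemma frob_ge0 m n (A : 'M[R]_(m, n)) : 0 <= frob A.
Proof. exact: sqrtr_ge0. Qed.

Lemma frob_sq m n (A : 'M[R]_(m, n)) : frob A ^+ 2 = fs A.
Proof. by rewrite frobE sqr_sqrtr // fs_ge0. Qed.

Lemma fs_col q (v : 'cV[R]_q) : fs v = \sum_k v k 0 ^+ 2.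
Proof. by apply: eq_bigr => k _; rewrite big_ord1. Qed.

Lemma fs_row q (v : 'rV[R]_q) : fs v = \sum_k v 0 k ^+ 2.
Proof. by rewrite /fs big_ord1. Qed.

Lemma frobZ m n a (A : 'M[R]_(m, n)) : frob (a *: A) = `|a| * frob A.
Proof.
rewrite !frobE -sqrtr_sqr -sqrtrM ?sqr_ge0 //; congr Num.sqrt.
rewrite /fs mulr_sumr; apply: eq_bigr => i _; rewrite mulr_sumr.
by apply: eq_bigr => j _; rewrite mxE exprMn.
Qed.

Lemma fs_mul_le p q (W : 'M[R]_(p, q)) (v : 'cV[R]_q) :
  fs (W *m v) <= fs W * fs v.
Proof.
rewrite fs_col fs_col /fs mulr_suml; apply: ler_sum => i _.
rewrite mxE.
exact: cs_sum.
Qed.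

Lemma frob_mul_le p q (W : 'M[R]_(p, q)) (v : 'cV[R]_q) :
  frob (W *m v) <= frob W * frob v.
Proof.
rewrite !frobE -sqrtrM ?fs_ge0 //; apply: ler_wsqrtr; exact: fs_mul_le.
Qed.

Lemma frob0 m n : frob (0 : 'M[R]_(m, n)) = 0.
Proof.
by rewrite frobE /fs big1 ?sqrtr0 // => i _; rewrite big1 // => j _; rewrite mxE expr0n.
Qed.

Lemma spec_has_sup p q (W : 'M[R]_(p, q)) :
  has_sup [set r | exists v : 'cV[R]_q, frob v <= 1 /\ r = frob (W *m v)].
Proof.
split.
  by exists 0; exists 0; rewrite mulmx0 !frob0; split => //; lra.
exists (frob W) => r [v [v1 ->]].
apply: le_trans (frob_mul_le W v) _.
by rewrite -{2}[frob W]mulr1 ler_wpM2l // frob_ge0.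
Qed.

Lemma specnorm_ub p q (W : 'M[R]_(p, q)) (v : 'cV[R]_q) :
  frob v <= 1 -> frob (W *m v) <= specnorm W.
Proof. by move=> v1; apply: (sup_upper_bound (spec_has_sup W)); exists v. Qed.

Lemma specnorm_ge0 p q (W : 'M[R]_(p, q)) : 0 <= specnorm W.
Proof.
have := specnorm_ub W (v := 0).
by rewrite mulmx0 !frob0; apply; lra.
Qed.

Lemma spec_bound p q (W : 'M[R]_(p, q)) (v : 'cV[R]_q) :
  frob (W *m v) <= specnorm W * frob v.
Proof.
have [t0|tpos] := eqVneq (frob v) 0.
  by rewrite t0 mulr0; have := frob_mul_le W v; rewrite t0 mulr0.
have tgt : 0 < frob v by rewrite lt_def tpos frob_ge0.
have := specnorm_ub W (v := (frob v)^-1 *: v).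
rewrite frobZ -scalemxAr frobZ ger0_norm ?invr_ge0 ?frob_ge0 // mulVf //.
move=> /(_ (lexx _)) H.
by rewrite -ler_pdivrMr // mulrC.
Qed.


Lemma cs_abs (m : nat) (f g : 'I_m -> R) :
  `|\sum_i f i * g i| <= Num.sqrt (\sum_i f i ^+ 2) * Num.sqrt (\sum_i g i ^+ 2).
Proof.
rewrite -sqrtr_sqr -sqrtrM; last by apply: sumr_ge0 => i _; apply: sqr_ge0.
by apply: ler_wsqrtr; apply: cs_sum.
Qed.

Lemma adj_bound d (W : 'M[R]_d) (u : 'I_d -> R) :
  \sum_k (\sum_j u j * W j k) ^+ 2 <= specnorm W ^+ 2 * \sum_j u j ^+ 2.
Proof.
set v : 'cV[R]_d := \col_k (\sum_j u j * W j k).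
set uc : 'cV[R]_d := \col_j u j.
have Ev : \sum_k (\sum_j u j * W j k) ^+ 2 = fs v.
  by rewrite fs_col; apply: eq_bigr => k _; rewrite mxE.
have Eu : \sum_j u j ^+ 2 = fs uc.
  by rewrite fs_col; apply: eq_bigr => k _; rewrite mxE.
have E2 : fs v = \sum_j uc j 0 * (W *m v) j 0.
  rewrite fs_col.
  under eq_bigr => k _ do rewrite expr2 {1}mxE mulr_suml.
  rewrite exchange_big /=; apply: eq_bigr => j _.
  rewrite !mxE mulr_sumr; apply: eq_bigr => k _.
  by rewrite mxE mulrA.
have H1 : fs v <= frob uc * frob (W *m v).
  rewrite E2 !frobE !fs_col.
  exact: le_trans (ler_norm _) (cs_abs _ _).
have H2 := spec_bound W v.
have s0 := specnorm_ge0 W.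
have fv0 := frob_ge0 v.
have fu0 := frob_ge0 uc.
have H3 : frob v ^+ 2 <= frob uc * specnorm W * frob v.
  rewrite frob_sq -mulrA; apply: le_trans H1 _.
  by apply: ler_wpM2l.
have H4 : frob v <= specnorm W * frob uc.
  have [->|vpos] := eqVneq (frob v) 0; first by apply: mulr_ge0.
  have vgt : 0 < frob v by rewrite lt_def vpos fv0.
  by rewrite expr2 ler_pM2r // mulrC in H3.
rewrite Ev Eu -!frob_sq -exprMn.
by rewrite ler_pXn2r // ?nnegrE //; apply: mulr_ge0.
Qed.


Lemma fs_mulW n d (Y : 'M[R]_(n, d)) (W : 'M[R]_d) :
  fs (Y *m W) <= specnorm W ^+ 2 * fs Y.
Proof.
rewrite /fs mulr_sumr; apply: ler_sum => i _.
under eq_bigr => k _ do rewrite mxE.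
exact: adj_bound.
Qed.

Lemma HCE n d (M : 'M[R]_(n, d)) i j :
  HC M i j = M i j - n%:R^-1 * \sum_k M k j.
Proof.
rewrite /HC mulmxBl mul1mx -scalemxAl !mxE; congr (_ - (_ * _)).
by apply: eq_bigr => k _; rewrite mxE mul1r.
Qed.

Lemma fs_HC n d (M : 'M[R]_(n, d)) : fs (HC M) <= fs M.
Proof.
case: n M => [|n] M; first by rewrite /fs !big_ord0.
rewrite /fs exchange_big [X in _ <= X]exchange_big /=.
apply: ler_sum => j _.
under eq_bigr => i _ do rewrite HCE.
set S := \sum_k M k j.
set c := n.+1%:R^-1.
have cn : c * n.+1%:R = 1 by rewrite mulVf // pnatr_eq0.
have E : \sum_i (M i j - c * S) ^+ 2 =
  \sum_i M i j ^+ 2 - 2 * c * S * (\sum_i M i j) + \sum_(i < n.+1) (c * S) ^+ 2.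
  rewrite [2 * c * S * _]mulr_sumr -sumrB -big_split /=.
  by apply: eq_bigr => i _; ring.
rewrite E -/S sumr_const card_ord.
have -> : (c * S) ^+ 2 *+ n.+1 = c * S * S * (c * n.+1%:R) by rewrite -mulr_natr; ring.
rewrite cn.
have : 0 <= c * S * S by rewrite -mulrA mulr_ge0 ?invr_ge0 ?ler0n ?sqr_ge0 // -expr2 sqr_ge0.
lra.
Qed.

Lemma fs_stoch n d (A : 'M[R]_n) (Z : 'M[R]_(n, d)) (c : R) :
  (forall i j, 0 <= A i j) -> (forall i, \sum_j A i j = 1) ->
  (forall j, \sum_i A i j <= c) -> fs (A *m Z) <= c * fs Z.
Proof.
move=> A0 A1 Ac.
apply: (@le_trans _ _ (\sum_i \sum_k \sum_j A i j * Z j k ^+ 2)).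
  apply: ler_sum => i _; apply: ler_sum => k _.
  rewrite mxE; have := @wjensen _ (fun j => A i j) (fun j => Z j k) (A0 i).
  by rewrite A1 mul1r.
have -> : \sum_i \sum_k \sum_j A i j * Z j k ^+ 2 =
    \sum_j \sum_k (\sum_i A i j) * Z j k ^+ 2.
  rewrite exchange_big /=.
  under eq_bigr => k _ do rewrite exchange_big /=.
  rewrite exchange_big /=; apply: eq_bigr => j _; apply: eq_bigr => k _.
  by rewrite mulr_suml.
rewrite /fs mulr_sumr; apply: ler_sum => j _; rewrite mulr_sumr; apply: ler_sum => k _.
by apply: ler_wpM2r; [exact: sqr_ge0 | exact: Ac].
Qed.

Definition cc n d (N : 'M[R]_(n, d)) := forall i i' j, N i j = N i' j.

Lemma HC_cc n d (N : 'M[R]_(n, d)) : cc N -> HC N = 0.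
Proof.
case: n N => [|n] N ccN; apply/matrixP => i j; first by case: i.
rewrite HCE mxE.
under eq_bigr => k _ do rewrite (ccN k i).
by rewrite sumr_const card_ord -[N i j *+ _]mulr_natr mulrCA mulVf ?pnatr_eq0 // mulr1 subrr.
Qed.

Lemma cc_mul n d e (N : 'M[R]_(n, d)) (W : 'M[R]_(d, e)) : cc N -> cc (N *m W).
Proof.
move=> ccN i i' j; rewrite !mxE; apply: eq_bigr => k _; by rewrite (ccN i i').
Qed.

Lemma stoch_cc n d (A : 'M[R]_n) (N : 'M[R]_(n, d)) :
  (forall i, \sum_j A i j = 1) -> cc N -> A *m N = N.
Proof.
move=> A1 ccN; apply/matrixP => i j; rewrite mxE.
under eq_bigr => k _ do rewrite (ccN k i).
by rewrite -mulr_suml A1 mul1r.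
Qed.

Lemma HCD n d (M N : 'M[R]_(n, d)) : HC (M + N) = HC M + HC N.
Proof. by rewrite /HC mulmxDr. Qed.


Lemma bigmax_ge (I : eqType) (r : seq I) (F : I -> R) x :
  x \in r -> F x <= \big[Num.max/0]_(i <- r) F i.
Proof.
elim: r => [//|y r IH]; rewrite inE big_cons => /orP [/eqP ->|xr].
  by rewrite le_max lexx.
by rewrite le_max (IH xr) orbT.
Qed.

Lemma maxabs_ge n m (P : 'M[R]_(n, m)) i j : `|P i j| <= maxabs P.
Proof.
apply: le_trans (bigmax_ge (fun i => \big[Num.max/0]_(j < m) `|P i j|) (mem_index_enum i)).
exact: (bigmax_ge (fun j => `|P i j|) (mem_index_enum j)).
Qed.

Lemma maxabs_le n m (P : 'M[R]_(n, m)) B :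
  0 <= B -> (forall i j, `|P i j| <= B) -> maxabs P <= B.
Proof.
move=> B0 H; rewrite /maxabs.
apply: (big_ind (fun x => x <= B)) => //; first by move=> x y; rewrite ge_max => -> ->.
move=> i _; apply: (big_ind (fun x => x <= B)) => //; first by move=> x y; rewrite ge_max => -> ->.
Qed.

Lemma softmax_ge0 n (P : 'M[R]_n) i j : 0 <= softmax P i j.
Proof.
rewrite mxE; apply: divr_ge0; first exact: expR_ge0.
by apply: sumr_ge0 => t _; apply: expR_ge0.
Qed.

Lemma softmax_row n (P : 'M[R]_n) i : \sum_j softmax P i j = 1.
Proof.
under eq_bigr => j _ do rewrite mxE.
rewrite -mulr_suml mulfV //.
have : 0 < \sum_t expR (P i t).
  by rewrite (bigD1 i) //= ltr_pwDl ?expR_gt0 // sumr_ge0 // => t _; apply: expR_ge0.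
by rewrite lt0r => /andP[].
Qed.

Lemma softmax_le n (P : 'M[R]_n) (a : R) i j :
  (forall i j, `|P i j| <= a) ->
  softmax P i j <= expR (2 * a) / (expR (2 * a) + n%:R - 1).
Proof.
move=> Ha; rewrite mxE.
set x := expR (P i j).
set T := \sum_(t | t != j) expR (P i t).
set ea := expR a; set eai := expR (- a).
have -> : \sum_t expR (P i t) = x + T by rewrite (bigD1 j).
have x0 : 0 < x by apply: expR_gt0.
have T0 : 0 <= T by apply: sumr_ge0 => t _; apply: expR_ge0.
have hx : x <= ea by rewrite ler_expR; have := Ha i j; rewrite ler_norml => /andP[].
have cst : \sum_(t | t != j) eai = n%:R * eai - eai.
  have H : \sum_(t < n) eai = eai + \sum_(t | t != j) eai by rewrite (bigD1 j).
  have H2 : \sum_(t < n) eai = n%:R * eai by rewrite sumr_const card_ord mulr_natl.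
  rewrite H2 in H; rewrite H; ring.
have hT : n%:R * eai - eai <= T.
  rewrite -cst; apply: ler_sum => t _; rewrite ler_expR.
  by have := Ha i t; rewrite ler_norml => /andP[].
have E2 : expR (2 * a) = ea * ea by rewrite mulr2n mulrDl mul1r expRD.
have h1 : ea * eai = 1 by apply: expRxMexpNx_1.
have ea0 : 0 < ea by apply: expR_gt0.
have eai0 : 0 < eai by apply: expR_gt0.
have n1 : 1 <= n%:R :> R by rewrite ler1n; exact: (leq_ltn_trans (leq0n j) (ltn_ord j)).
rewrite E2.
have D0 : 0 < ea * ea + n%:R - 1 by rewrite -addrA ltr_pwDl ?mulr_gt0 // subr_ge0.
rewrite ler_pdivlMr // mulrAC ler_pdivrMr ?ltr_pwDl //.
have h4 : ea * (n%:R - 1) <= ea * ea * T.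
  have := ler_wpM2l (ltW (mulr_gt0 ea0 ea0)) hT.
  suff -> : ea * ea * (n%:R * eai - eai) = ea * (n%:R - 1) by [].
  have -> : ea * ea * (n%:R * eai - eai) = ea * (n%:R - 1) * (ea * eai) by ring.
  by rewrite h1 mulr1.
have h5 : x * (n%:R - 1) <= ea * (n%:R - 1) by apply: ler_wpM2r; rewrite // subr_ge0.
have -> : x * (ea * ea + n%:R - 1) = x * (ea * ea) + x * (n%:R - 1) by ring.
have -> : ea * ea * (x + T) = x * (ea * ea) + ea * ea * T by ring.
lra.
Qed.


Lemma fs_tr m n (A : 'M[R]_(m, n)) : fs A^T = fs A.
Proof. by rewrite /fs exchange_big; apply: eq_bigr => i _; apply: eq_bigr => j _; rewrite mxE. Qed.

Lemma triple_eq d dk (x y : 'I_d -> R) (Q K : 'M[R]_(d, dk)) :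
  \sum_k (\sum_b x b * Q b k) * (\sum_c y c * K c k) =
  \sum_b x b * \sum_c (\sum_k Q b k * K c k) * y c.
Proof.
under eq_bigr => k _ do rewrite mulr_suml.
under eq_bigr => k _ do under eq_bigr => b _ do rewrite mulr_sumr.
rewrite exchange_big /=; apply: eq_bigr => b _.
rewrite exchange_big /= mulr_sumr; apply: eq_bigr => c _.
rewrite mulr_suml mulr_sumr; apply: eq_bigr => k _.
ring.
Qed.

End Gen.

Unset Implicit Arguments.

Theorem theorem3 (R : realType) (n d : nat) (P : 'M[R]_n) (X : 'M[R]_(n, d)) :
  let alpha := maxabs P in
  (forall WV : 'M[R]_d,
     frob (HC (softmax P *m X *m WV)) <=
       Num.sqrt (n%:R * expR (2 * alpha) / (expR (2 * alpha) + n%:R - 1))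
       * specnorm WV * frob (HC X))
  /\
  (forall (dk : nat) (WQ WK : 'M[R]_(d, dk)) (gamma : R),
     0 < gamma ->
     P = (Num.sqrt d%:R)^-1 *: ((X *m WQ) *m (X *m WK)^T) ->
     (forall i : 'I_n, frob (row i X) <= gamma) ->
     alpha <= gamma ^+ 2 * specnorm (WQ *m WK^T) / Num.sqrt d%:R).
Proof.
move=> alpha; rewrite {}/alpha; split.
  move=> WV.
  have s0 := specnorm_ge0 WV.
  case: n P X => [|n] P X.
    rewrite frobE /fs big_ord0 sqrtr0.
    by apply: mulr_ge0; [apply: mulr_ge0 => //; apply: sqrtr_ge0 | apply: frob_ge0].
  set E2 := expR (2 * maxabs P).
  set c := n.+1%:R * E2 / (E2 + n.+1%:R - 1).
  have E20 : 0 < E2 by apply: expR_gt0.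
  have c0 : 0 <= c.
    apply: divr_ge0; first by apply: mulr_ge0 => //; apply: ltW.
    by rewrite -addrA addr_ge0 ?subr_ge0 ?ler1n // ltW.
  set A := softmax P.
  set Z := HC X.
  set D := X - Z.
  have ccD : cc D.
    move=> i i' k; rewrite /D /Z; move: (HCE X); move: (HC X) => Y HY; rewrite !mxE !HY; ring.
  have HA : (forall j, \sum_i A i j <= c).
    move=> j; rewrite /c -mulrA.
    have -> : n.+1%:R * (E2 / (E2 + n.+1%:R - 1)) = \sum_(i < n.+1) (E2 / (E2 + n.+1%:R - 1)).
      by rewrite sumr_const card_ord mulr_natl.
    apply: ler_sum => i _; apply: softmax_le => i' j'.
    exact: (maxabs_ge P i' j').
  have EQ : HC (A *m X *m WV) = HC (A *m Z *m WV).
    have -> : X = Z + D by rewrite /D addrC subrK.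
    rewrite mulmxDr (stoch_cc (softmax_row P) ccD) mulmxDl HCD.
    by rewrite (HC_cc (cc_mul WV ccD)) addr0.
  have Hfs : fs (HC (A *m X *m WV)) <= specnorm WV ^+ 2 * (c * fs Z).
    rewrite EQ; apply: le_trans (fs_HC _) _.
    apply: le_trans (fs_mulW _ _) _.
    apply: ler_wpM2l; first exact: sqr_ge0.
    apply: fs_stoch => //; [exact: softmax_ge0 | exact: softmax_row].
  rewrite frobE (frobE Z).
  apply: le_trans (ler_wsqrtr Hfs) _.
  rewrite sqrtrM ?sqr_ge0 // sqrtr_sqr ger0_norm // sqrtrM //.
  by rewrite mulrA [specnorm WV * _]mulrC.
move=> dk WQ WK gamma g0 hP hrow.
set s := specnorm (WQ *m WK^T).
have s0 : 0 <= s by apply: specnorm_ge0.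
have sd0 : 0 <= (Num.sqrt (d%:R : R))^-1 by rewrite invr_ge0 sqrtr_ge0.
apply: maxabs_le.
  by rewrite mulr_ge0 // mulr_ge0 // ?exprn_ge0 // ltW.
move=> i j.
set v : 'cV[R]_d := (WQ *m WK^T) *m (row j X)^T.
have Pij : P i j = (Num.sqrt d%:R)^-1 * \sum_b X i b * v b 0.
  rewrite hP !mxE; congr (_ * _).
  under eq_bigr => k _ do rewrite !mxE.
  rewrite triple_eq; apply: eq_bigr => b _; congr (_ * _).
  rewrite mxE; apply: eq_bigr => c _; rewrite !mxE; congr (_ * _).
  by apply: eq_bigr => k _; rewrite mxE.
have hv : frob v <= s * gamma.
  apply: le_trans (spec_bound _ _) _.
  apply: ler_wpM2l => //.
  by rewrite frobE fs_tr -frobE.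
have hi : Num.sqrt (\sum_b X i b ^+ 2) <= gamma.
  have := hrow i; rewrite frobE fs_row.
  by under eq_bigr => b _ do rewrite mxE.
rewrite Pij normrM ger0_norm // [X in _ <= X]mulrC.
apply: ler_wpM2l => //.
apply: le_trans (cs_abs _ _) _.
rewrite -fs_col -frobE.
have -> : gamma ^+ 2 * s = gamma * (s * gamma) by ring.
by apply: ler_pM => //; [exact: sqrtr_ge0 | exact: frob_ge0].
Qed.
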